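(* Let $a\in[0,\infty)$ and let $t:[0,1]\to[0,\infty]$ and $s:[0,\infty]\to[0,1]$ be continuous and increasing functions such that (1) $s(x)=0$ if and only if $x\in[0,a]$, and (2) the function $G_{t,s}:[0,1]^2\to[0,1]$, $G_{t,s}(x,y)=s(t(x)+t(y))$, is a grouping function. Then $t(x)=\frac{a}{2}$ if and only if $x=0$.
   Context: ''Increasing'' means non-decreasing. Arithmetic in $[0,\infty]$ uses $c+\infty=\infty$; continuity on $[0,\infty]$ refers to the usual topology of the extended half-line. A grouping function is a map $G:[0,1]^2\to[0,1]$ that is (G1) commutative, (G2) $G(x,y)=0$ iff $x=y=0$, (G3) $G(x,y)=1$ iff $x=1$ or $y=1$, (G4) increasing in each variable, (G5) continuous. *)

(* Defs.v *)
From HB Require Import structures.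
From mathcomp Require Import all_boot all_order all_algebra.
From mathcomp Require Import all_classical all_reals all_analysis.
Set Implicit Arguments. Unset Strict Implicit. Unset Printing Implicit Defensive.
Import Order.TTheory GRing.Theory Num.Theory.
Import numFieldNormedType.Exports.
Local Open Scope classical_set_scope.
Local Open Scope ring_scope.

Definition unit_itv {R : realType} : set R := [set x | 0 <= x <= 1].

Definition unit_sq {R : realType} : set (R * R) :=
  [set p | unit_itv p.1 /\ unit_itv p.2].

(* Grouping function G : [0,1]^2 -> [0,1] (values outside [0,1]^2 irrelevant). *)
Definition grouping_function (R : realType) (G : R -> R -> R) : Prop :=
  (forall x y, unit_itv x -> unit_itv y -> unit_itv (G x y)) /\
      (forall x y, unit_itv x -> unit_itv y -> G x y = G y x) /\
      (forall x y, unit_itv x -> unit_itv y -> (G x y = 0 <-> x = 0 /\ y = 0)) /\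
      (forall x y, unit_itv x -> unit_itv y -> (G x y = 1 <-> x = 1 \/ y = 1)) /\
      (forall x y z, unit_itv x -> unit_itv y -> unit_itv z ->
          y <= z -> G x y <= G x z /\ G y x <= G z x) /\
      {within unit_sq, continuous (fun p : R * R => G p.1 p.2)}.

(* Main.v *)
Require Import Defs.
From HB Require Import structures.
From mathcomp Require Import all_boot all_order all_algebra.
From mathcomp Require Import all_classical all_reals all_analysis.
From mathcomp Require Import lra.
Import Order.TTheory GRing.Theory Num.Theory.
Import numFieldNormedType.Exports.
Local Open Scope classical_set_scope.
Local Open Scope ring_scope.
Lemma foo (R : realType) (t : R -> \bar R) (c : R) :
 {within unit_itv, continuous t} -> t 0 = c%:E -> forall (b : R), c < b -> exists y : R, 0 < y <= 1 /\ (t y < b%:E)%E.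
Proof.
move=> ct t0 b cb.
have h := ct 0.
have A0 : unit_itv (0:R) by rewrite /unit_itv /= lexx ler01.
have : \forall x \near nbhs (0 : subspace unit_itv), (t x < b%:E)%E.
  apply: (h (fun u => (u < b%:E)%E)); rewrite /from_subspace t0; exact: open_ereal_lt'.
move=> H.
have : within unit_itv (nbhs (0:R)) (fun x => (t x < b%:E)%E) by rewrite nbhs_subspace_in.
move=> /nbhs_ballP [e /= e0 He].
exists (Num.min (e/2) 1); split.
  by rewrite lt_min ltr01 divr_gt0 // ge_min lexx orbT.
apply: He.
  rewrite /ball /= sub0r normrN ger0_norm; last by rewrite le_min ler01 ltW // divr_gt0.
  by rewrite gt_min ltr_pdivrMr // ltr_pMr // ltr1n.
by rewrite /unit_itv /= ge_min lexx orbT le_min ler01 ltW // divr_gt0.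
Qed.

Theorem proposition6p1 (R : realType) (a : R) (t : R -> \bar R) (s : \bar R -> R) :
  0 <= a ->
  (* t : [0,1] -> [0,+oo], continuous and increasing *)
  (forall x, unit_itv x -> (0 <= t x)%E) ->
  {within unit_itv, continuous t} ->
  (forall x y, unit_itv x -> unit_itv y -> x <= y -> (t x <= t y)%E) ->
  (* s : [0,+oo] -> [0,1], continuous and increasing *)
  (forall u : \bar R, (0 <= u)%E -> unit_itv (s u)) ->
  {within [set u : \bar R | (0 <= u)%E], continuous s} ->
  (forall u v : \bar R, (0 <= u)%E -> (0 <= v)%E -> (u <= v)%E -> s u <= s v) ->
  (* (1) s(u) = 0 iff u in [0,a] *)
  (forall u : \bar R, (0 <= u)%E -> (s u = 0 <-> (u <= a%:E)%E)) ->
  (* (2) G_{t,s} is a grouping function *)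
  grouping_function (fun x y => s (t x + t y)%E) ->
  forall x, unit_itv x -> (t x = (a / 2)%:E <-> x = 0).
Proof.
move=> a0 tge ct tmon sI cs smon s0 [_ [_ [G2 _]]] x Ix.
have I0 : unit_itv (0:R) by rewrite /unit_itv /= lexx ler01.
have h00 : s (t 0%R + t 0%R)%E = 0%R by apply/G2.
have := tge 0 I0.
have := (s0 _ (adde_ge0 (tge 0 I0) (tge 0 I0))).1 h00.
case E0 : (t 0) => [c| |] //= ha c0.
move: ha; rewrite -EFinD lee_fin => ha; rewrite lee_fin in c0.
have ca : c = a / 2.
  apply/eqP; rewrite eq_le; apply/andP; split; first lra.
  rewrite leNgt; apply/negP => cb.
  have [y [/andP [y0 y1] ty]] := @foo _ _ _ ct E0 (a - c) ltac:(lra).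
  have Iy : unit_itv y by rewrite /unit_itv /= (ltW y0) y1.
  have ty0 := tge y Iy.
  have : s (t y + t 0%R)%E = 0%R.
    apply/(s0 _ (adde_ge0 ty0 (tge 0 I0))).
    rewrite E0; move: ty ty0; case: (t y) => [r| |] //=.
    rewrite !lte_fin !lee_fin => ??; change (((r + c)%:E) <= a%:E)%E; rewrite lee_fin; lra.
  by move/(G2 _ _ Iy I0) => [y0' _]; move: y0; rewrite y0' ltxx.
split.
  move=> tx.
  have : s (t x + t x)%E = 0%R.
    apply/(s0 _ (adde_ge0 (tge x Ix) (tge x Ix))).
    by rewrite tx -EFinD lee_fin; lra.
  by move/(G2 _ _ Ix Ix) => [].
by move=> ->; rewrite E0 ca.
Qed.
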